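(* Let $\mathcal{D}$ be an $S(2,k,v)$ with $v>k^3-2k^2+2k$. Then $G_0=0$-$\mathrm{BIG}(\mathcal{D})$ is not silver.
   Context: A Steiner $2$-design $S(2,k,v)$ ($2<k<v$) is a pair $(V,\mathcal{B})$ with $|V|=v$ and $\mathcal{B}$ a collection of $k$-subsets of $V$ (blocks) such that every $2$-subset of $V$ lies in exactly one block. The $0$-block intersection graph $0$-$\mathrm{BIG}(\mathcal{D})$ has the blocks as vertices, two blocks adjacent iff they are disjoint; it is a regular graph. An $\alpha$-set of a graph is a maximum independent set. Let $G$ be an $r$-regular graph and $c$ a proper $(r+1)$-coloring of $G$. A vertex $x$ is rainbow with respect to $c$ if every one of the $r+1$ colors appears on $N[x]=N(x)\cup\{x\}$. Given an $\alpha$-set $I$, $c$ is silver with respect to $I$ if every $x\in I$ is rainbow; $G$ is silver if it admits a silver coloring with respect to some $\alpha$-set. *)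

(* Defs.v *)
From mathcomp Require Import all_boot.
Set Implicit Arguments. Unset Strict Implicit. Unset Printing Implicit Defensive.

(* Steiner 2-design S(2,k,v) on point set V (v = #|V|) with block set B *)
Definition steiner2 (V : finType) (k : nat) (B : {set {set V}}) : Prop :=
  [/\ 2 < k, k < #|V|,
      (forall b, b \in B -> #|b| = k) &
      (forall x y : V, x != y ->
         exists! b : {set V}, [&& b \in B, x \in b & y \in b])].

Definition zeroBIG_adj (V : finType) : rel {set V} :=
  fun b1 b2 => [disjoint b1 & b2].

Section Graph.
Variables (T : finType) (S : {set T}) (adj : rel T).

Definition nbhd (x : T) : {set T} := [set y in S | adj x y].

Definition closed_nbhd (x : T) : {set T} := x |: nbhd x.

Definition regular (r : nat) : Prop := forall x, x \in S -> #|nbhd x| = r.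

Definition independent (I : {set T}) : Prop :=
  I \subset S /\ (forall x y, x \in I -> y \in I -> ~~ adj x y).

Definition alpha_set (I : {set T}) : Prop :=
  independent I /\ (forall J, independent J -> #|J| <= #|I|).

Definition proper_coloring (m : nat) (c : T -> 'I_m) : Prop :=
  forall x y, x \in S -> y \in S -> adj x y -> c x != c y.

Definition rainbow (m : nat) (c : T -> 'I_m) (x : T) : Prop :=
  forall i : 'I_m, exists2 y, y \in closed_nbhd x & c y = i.

Definition silver_wrt (r : nat) (I : {set T}) : Prop :=
  exists c : T -> 'I_(r.+1),
    proper_coloring c /\ (forall x, x \in I -> rainbow c x).

Definition silver : Prop :=
  exists r, regular r /\ exists I, alpha_set I /\ silver_wrt r I.
End Graph.

(* Main.v *)
Require Import Defs.
From Stdlib Require Import Lia Arith.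
From mathcomp Require Import all_boot.
Set Implicit Arguments. Unset Strict Implicit. Unset Printing Implicit Defensive.

Lemma card_sum_ind (T : finType) (X S : {set T}) :
  #|X :&: S| = \sum_(z in S) (z \in X : nat).
Proof.
rewrite -sum1_card [LHS]big_mkcond [RHS]big_mkcond /=.
by apply: eq_bigr => z _; rewrite in_setI; case: (z \in X); case: (z \in S).
Qed.

Lemma dcount (V : finType) (A : {set {set V}}) (S : {set V}) :
  \sum_(b in A) #|b :&: S| = \sum_(z in S) #|[set b in A | z \in b]|.
Proof.
under eq_bigr do rewrite card_sum_ind.
rewrite exchange_big /=.
apply: eq_bigr => z _.
rewrite -[[set b in A | z \in b]]setIT setIC.
rewrite card_sum_ind.
rewrite [RHS]big_mkcond [LHS]big_mkcond /=.
apply: eq_bigr => b _. by rewrite !inE; case: (b \in A).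
Qed.

Lemma card_bigcup_le (T I : finType) (A : {pred I}) (F : I -> {set T}) :
  #|\bigcup_(i in A) F i| <= \sum_(i in A) #|F i|.
Proof.
apply: (big_ind2 (fun (X : {set T}) n => #|X| <= n)) => //.
- by rewrite cards0.
- move=> X1 n1 X2 n2 h1 h2; apply: leq_trans (leq_card_setU X1 X2) _.
  exact: leq_add.
Qed.

Lemma ndisj (T : finType) (A B : {set T}) x : x \in A -> x \in B -> ~~ [disjoint A & B].
Proof. by move=> hA hB; apply/negP => /disjointFr h; rewrite (h x hA) in hB. Qed.

Lemma nd_ex (T : finType) (A B : {set T}) : ~~ [disjoint A & B] -> exists x, x \in A /\ x \in B.
Proof. rewrite -setI_eq0 => /set0Pn [x]; rewrite inE => /andP [h1 h2]; by exists x. Qed.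

Lemma ar1 (k R v : nat) : 2 < k -> R * (k-1) = v - 1 -> k ^ 3 - 2 * k ^ 2 + 2 * k < v -> k*(k-1)+1 < R.
Proof.
move=> /leP hk /eqP h1 /leP h2. apply/leP. move/eqP: h1.
rewrite !expnE -!plusE -!multE -!minusE /= in h2 *.
move=> h1. simpl in *.
nia.
Qed.
Lemma ar2 (k R v b r : nat) : 2 < k -> R * (k-1) = v - 1 -> b * k = v * R ->
  3 * r.+1 <= b -> b <= 1 + r + k * (R - 1) -> k ^ 3 - 2 * k ^ 2 + 2 * k < v -> False.
Proof.
move=> /leP hk /eqP h1 /eqP h2 /leP h3 /leP h4 /leP h5.
move: h1 h2; rewrite !expnE -!plusE -!multE -!minusE /= in h3 h4 h5 *.
move=> /eqP h1 /eqP h2. simpl in *.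
destruct k as [|[|[|m]]]; try lia.
remember (S (S (S m))) as K eqn:HKe.
assert (Hv : (2 * K < v)%coq_nat).
{ clear -h5 hk. remember (K*K)%coq_nat as X. remember (K*X)%coq_nat as Y.
  assert (HXY : (2 * X <= Y)%coq_nat). { subst Y. rewrite -?multE. nia. }
  clear HeqX HeqY. rewrite -?multE in HXY *. lia. }
destruct R as [|R']. { rewrite Nat.mul_0_l in h1. lia. }
replace (K - 1)%coq_nat with (S (S m)) in h1 by lia.
replace (S R' - 1)%coq_nat with R' in h4 by lia.
assert (H6 : (2 * b <= 3 * K * R')%coq_nat) by (rewrite -?multE; lia).
assert (H7 : (2 * b * K <= 3 * K * R' * K)%coq_nat) by (rewrite -?multE; apply Nat.mul_le_mono_r; lia).
assert (H8 : (2 * (v * S R') <= 3 * K * K * R')%coq_nat) by (rewrite -?multE -h2; rewrite -?multE in H7; lia).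
assert (H9 : (2 * v < 3 * K * K)%coq_nat).
{ rewrite -?multE in H8 *. destruct (Nat.lt_ge_cases (2*v) (3*K*K)) as [|Hc]; auto.
  assert (3*K*K * S R' <= 2 * v * S R')%coq_nat by (rewrite -?multE; apply Nat.mul_le_mono_r; lia). rewrite -?multE in H. lia. }
clear -H9 h5 hk.
rewrite -?multE in H9 h5. rewrite <- Nat.mul_assoc in H9.
remember (K*K)%coq_nat as X. remember (K*X)%coq_nat as Y.
destruct (Nat.eq_dec K 3) as [e|ne].
- subst K. simpl in HeqX. subst X. simpl in HeqY. subst Y. lia.
- assert (H4 : (4 <= K)%coq_nat) by lia. assert (HH : (4 * X <= Y)%coq_nat) by (subst Y; rewrite -?multE; nia). clear HeqX HeqY. rewrite -?multE in HH. lia.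
Qed.

Section Design.
Variables (V : finType) (k : nat) (B : {set {set V}}).
Hypothesis hk : 2 < k.
Hypothesis hsz : forall b, b \in B -> #|b| = k.
Hypothesis hex : forall x y : V, x != y -> exists b, [&& b \in B, x \in b & y \in b].
Hypothesis huq : forall x y : V, x != y -> forall b1 b2, b1 \in B -> b2 \in B ->
  x \in b1 -> y \in b1 -> x \in b2 -> y \in b2 -> b1 = b2.

Definition star (q : V) := [set b in B | q \in b].

Lemma star_count q : #|star q| * (k - 1) = #|V| - 1.
Proof.
have := dcount (star q) (~: [set q]).
have -> : \sum_(b in star q) #|b :&: ~: [set q]| = \sum_(b in star q) (k - 1).
  apply: eq_bigr => b; rewrite inE => /andP [bB qb].
  by rewrite -setDE -(hsz bB) (cardsD1 q b) qb add1n subSS subn0.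
rewrite sum_nat_const => ->.
have -> : \sum_(z in ~: [set q]) #|[set b in star q | z \in b]| = \sum_(z in ~: [set q]) 1.
  apply: eq_bigr => z; rewrite !inE => zq.
  have zq' : q != z by rewrite eq_sym.
  have [b0 /and3P [b0B qb0 zb0]] := hex zq'.
  suff -> : [set b in star q | z \in b] = [set b0] by rewrite cards1.
  apply/setP => b; rewrite !inE; apply/idP/eqP.
  - case/andP => /andP [bB qb] zb. exact: (huq zq' bB b0B).
  - by move=> ->; rewrite b0B qb0 zb0.
by rewrite sum1_card cardsC1 subn1.
Qed.

Lemma star_eq p q : #|star p| = #|star q|.
Proof.
apply/eqP; rewrite -(eqn_pmul2r (_ : 0 < k - 1)); last by rewrite subn_gt0 ltnW.
by rewrite !star_count.
Qed.

Lemma blocks_count p : #|B| * k = #|V| * #|star p|.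
Proof.
have := dcount B [set: V].
have -> : \sum_(b in B) #|b :&: [set: V]| = \sum_(b in B) k.
  by apply: eq_bigr => b bB; rewrite setIT hsz.
rewrite sum_nat_const => ->.
under eq_bigr => z _ do rewrite -[[set b in B | z \in b]]/(star z) (star_eq z p).
by rewrite sum_nat_const cardsT.
Qed.

Lemma star_lemma (F : {set {set V}}) : F \subset B ->
  (forall x y, x \in F -> y \in F -> ~~ [disjoint x & y]) ->
  k * (k - 1) + 1 < #|F| -> exists q, F \subset star q.
Proof.
move=> FB Fint Fbig.
case: (boolP [exists q, F \subset star q]) => [/existsP [q h] | hn]; first by exists q.
exfalso.
have [C CF] : exists C, C \in F.
  by apply/set0Pn; rewrite -card_gt0; move: Fbig; case: #|F|.
have Hq : forall q, q \in C -> #|[set y in F | q \in y] :\ C| <= k - 1.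
  move=> q qC.
  have /subsetPn [D DF qD] : ~~ (F \subset star q).
    by move: hn; rewrite negb_exists => /forallP /(_ q).
  rewrite inE (subsetP FB D DF) /= in qD.
  set Fq := [set y in F | q \in y].
  pose f (y : {set V}) := odflt q [pick z in y :&: D].
  have fP : forall y, y \in F -> f y \in y :&: D.
    move=> y yF; rewrite /f; case: pickP => [z //|h].
    have [z [zy zD]] := nd_ex (Fint y D yF DF).
    by have := h z; rewrite inE zy zD.
  have : #|f @: Fq| <= #|D|.
    apply: subset_leq_card; apply/subsetP => w /imsetP [y yFq ->]; move: yFq; rewrite inE => /andP [yF _].
    by have := fP y yF; rewrite inE => /andP [].
  rewrite card_in_imset; last first.
    move=> y1 y2; rewrite !inE => /andP [y1F qy1] /andP [y2F qy2] hf.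
    have := fP y1 y1F; have := fP y2 y2F; rewrite -hf !inE => /andP [zy2 zD] /andP [zy1 _].
    have qz : q != f y1 by apply/eqP => e; rewrite -e in zD; rewrite zD in qD.
    exact: (huq qz (subsetP FB _ y1F) (subsetP FB _ y2F)).
  have CFq : C \in Fq by rewrite inE CF qC.
  rewrite (hsz (subsetP FB D DF)) (cardsD1 C Fq) CFq => h.
  have k1 : 0 < k by apply: leq_trans hk.
  by rewrite leq_subRL // add1n.
have sub : F \subset C |: \bigcup_(q in C) ([set y in F | q \in y] :\ C).
  apply/subsetP => y yF; rewrite !inE; case: (eqVneq y C) => [//|yC] /=.
  have [q [qy qC]] := nd_ex (Fint y C yF CF).
  by apply/bigcupP; exists q => //; rewrite !inE yC yF qy.
have := subset_leq_card sub; rewrite cardsU1 => h1.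
have h2 := card_bigcup_le C (fun q => [set y in F | q \in y] :\ C).
have h3 : \sum_(q in C) #|[set y in F | q \in y] :\ C| <= \sum_(q in C) (k - 1).
  by apply: leq_sum => q qC; apply: Hq.
rewrite sum_nat_const (hsz (subsetP FB C CF)) in h3.
have h4 : #|F| <= 1 + k * (k - 1).
  apply: (leq_trans h1); apply: leq_add; first by case: (_ \notin _).
  exact: leq_trans h2 h3.
by move: (leq_trans Fbig h4); rewrite addnC ltnn.
Qed.

Lemma cover_contra p y1 y2 : y1 \in B -> y2 \in B -> ~~ [disjoint y1 & y2] -> p \notin y2 ->
  (forall x, x \in star p -> exists y, (y = y1 \/ y = y2) /\ (y = x \/ [disjoint x & y])) -> False.
Proof.
move=> y1B y2B d12 py2 cov.
suff [x [xs [xy1 [xy2 [d1 d2]]]]] : exists x, x \in star p /\ x != y1 /\ x != y2 /\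
    ~~ [disjoint x & y1] /\ ~~ [disjoint x & y2].
  have [y [[->|->] [e|d]]] := cov x xs.
  - by rewrite e eqxx in xy1.
  - by rewrite d in d1.
  - by rewrite e eqxx in xy2.
  - by rewrite d in d2.
case: (boolP (p \in y1)) => py1.
- have [z [zy2 zy1]] : exists z, z \in y2 /\ z \notin y1.
    case: (boolP (y2 \subset y1)) => [s|/subsetPn [z ? ?]]; last by exists z.
    have : y2 == y1 by rewrite eqEcard s (hsz y1B) (hsz y2B) leqnn.
    by move/eqP => e; rewrite e py1 in py2.
  have pz : p != z by apply/eqP => e; rewrite e zy2 in py2.
  have [x /and3P [xB px zx]] := hex pz.
  exists x; split; first by rewrite inE xB px.
  split; first by apply/eqP => e; move: zy1; rewrite -e zx.
  split; first by apply/eqP => e; move: py2; rewrite -e px.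
  split; [exact: ndisj px py1 | exact: ndisj zx zy2].
- have [q [qy1 qy2]] := nd_ex d12.
  have pq : p != q by apply/eqP => e; move: py2; rewrite e qy2.
  have [x /and3P [xB px qx]] := hex pq.
  exists x; split; first by rewrite inE xB px.
  split; first by apply/eqP => e; move: py1; rewrite -e px.
  split; first by apply/eqP => e; move: py2; rewrite -e px.
  split; [exact: ndisj qx qy1 | exact: ndisj qx qy2].
Qed.

Lemma class_big p (C : {set {set V}}) : C \subset B ->
  (forall x y, x \in C -> y \in C -> ~~ [disjoint x & y]) ->
  (forall x, x \in star p -> exists2 y, y \in C & (y = x \/ [disjoint x & y])) ->
  2 < #|star p| -> 2 < #|C|.
Proof.
move=> CB Cint cov sp.
rewrite ltnNge; apply/negP => C2.
have [x0 x0s] : exists x, x \in star p.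
  by apply/set0Pn; rewrite -card_gt0; exact: leq_trans _ sp.
have [y1 y1C _] := cov x0 x0s.
have [y2 [y2C hC]] : exists y2, y2 \in C /\ forall y, y \in C -> y = y1 \/ y = y2.
  case: (boolP (C :\ y1 == set0)) => [/eqP e | /set0Pn [y2 y2D]].
  + exists y1; split => // y yC; left; apply/eqP; apply: contraT => ny.
    have : y \in C :\ y1 by rewrite in_setD1 ny yC.
    by rewrite e inE.
  + exists y2; move: (y2D); rewrite inE => /andP [_ y2C]; split => // y yC.
    case: (eqVneq y y1) => [->|ny]; [by left|right].
    have le1 : #|C :\ y1| <= 1 by move: C2; rewrite (cardsD1 y1 C) y1C add1n ltnS.
    have yD : y \in C :\ y1 by rewrite in_setD1 ny yC.
    by move/card_le1_eqP: le1 => /(_ y y2 yD y2D).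
have cov' : forall x, x \in star p -> exists y, (y = y1 \/ y = y2) /\ (y = x \/ [disjoint x & y]).
  by move=> x xs; have [y yC h] := cov x xs; exists y; split => //; exact: hC.
have y1B := subsetP CB _ y1C; have y2B := subsetP CB _ y2C.
case: (boolP (p \in y2)) => py2; last exact: (cover_contra y1B y2B (Cint _ _ y1C y2C) py2 cov').
case: (boolP (p \in y1)) => py1; last first.
  apply: (cover_contra y2B y1B (Cint _ _ y2C y1C) py1) => x xs.
  have [y [[e|e] h]] := cov' x xs; exists y; split => //; by [right|left].
have : star p \subset C.
  apply/subsetP => x xs. have [y yC [e|d]] := cov x xs; first by rewrite -e.
  exfalso; move: xs; rewrite inE => /andP [_ px].
  have py : p \in y by case: (hC y yC) => ->.
  by move: d; rewrite (negbTE (ndisj px py)).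
move/subset_leq_card => h.
by move: (leq_trans sp (leq_trans h C2)).
Qed.

Lemma reg_bound x p : x \in B ->
  #|B| <= 1 + #|[set y in B | [disjoint x & y]]| + k * (#|star p| - 1).
Proof.
move=> xB.
set N := [set y in B | [disjoint x & y]].
have sub : B \subset x |: (N :|: \bigcup_(q in x) (star q :\ x)).
  apply/subsetP => y yB; rewrite !inE; case: (eqVneq y x) => [//|yx] /=.
  case: (boolP [disjoint x & y]) => d; first by rewrite yB.
  have [q [qx qy]] := nd_ex d.
  by apply/orP; right; apply/bigcupP; exists q => //; rewrite !inE yx yB qy.
have := subset_leq_card sub; rewrite cardsU1 => h1.
have h2 := leq_card_setU N (\bigcup_(q in x) (star q :\ x)).
have h3 := card_bigcup_le x (fun q => star q :\ x).
have h4 : \sum_(q in x) #|star q :\ x| = \sum_(q in x) (#|star p| - 1).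
  apply: eq_bigr => q qx.
  by rewrite (star_eq p q) [in RHS](cardsD1 x (star q)) inE xB qx add1n subSS subn0.
rewrite h4 sum_nat_const (hsz xB) in h3.
apply: (leq_trans h1); rewrite -addnA; apply: leq_add; first by case: (_ \notin _).
apply: leq_trans h2 _; exact: leq_add.
Qed.

End Design.

Theorem theorem7 (V : finType) (k : nat) (B : {set {set V}}) :
  steiner2 k B ->
  k ^ 3 - 2 * k ^ 2 + 2 * k < #|V| ->
  ~ silver B (@zeroBIG_adj V).
Proof.
move=> [hk hkv hsz huniq] hv [r [hreg [I [[[IB Iind] Imax] [c [cprop crain]]]]]].
have hex : forall x y : V, x != y -> exists b, [&& b \in B, x \in b & y \in b].
  by move=> x y xy; have [b [h _]] := huniq x y xy; exists b.
have huq : forall x y : V, x != y -> forall b1 b2, b1 \in B -> b2 \in B ->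
    x \in b1 -> y \in b1 -> x \in b2 -> y \in b2 -> b1 = b2.
  move=> x y xy b1 b2 b1B b2B x1 y1 x2 y2; have [b [_ u]] := huniq x y xy.
  by rewrite -(u b1) ?b1B ?x1 ?y1 // -(u b2) ?b2B ?x2 ?y2.
have [p0 _] : exists p0 : V, p0 \in [set: V].
  by apply/set0Pn; rewrite -card_gt0 cardsT; apply: leq_ltn_trans hkv.
have Rbig := ar1 hk (star_count hsz hex huq p0) hv.
have sind : independent B (@zeroBIG_adj V) (star B p0).
  split; first by apply/subsetP => b; rewrite inE => /andP [].
  move=> x y; rewrite !inE => /andP [_ px] /andP [_ py]; exact: ndisj px py.
have hI := Imax _ sind.
have [q Iq] := star_lemma hk hsz huq IB Iind (leq_trans Rbig hI).
have Ieq : I = star B q.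
  apply/eqP; rewrite eqEcard Iq /=.
  by rewrite (star_eq hk hsz hex huq q p0).
have Rq := star_count hsz hex huq q.
have Rbigq : k * (k - 1) + 1 < #|star B q| by rewrite (star_eq hk hsz hex huq q p0).
have sp2 : 2 < #|star B q|.
  have h2 : 2 <= k * (k - 1).
    have k1 : 0 < k by apply: leq_trans hk.
    apply: (@leq_trans (1 * 2)) => //; apply: leq_mul => //.
    by rewrite leq_subRL // add1n.
  apply: leq_trans _ Rbigq; rewrite ltnS addn1; exact: leq_trans h2 (leqnSn _).
have cls : forall i : 'I_r.+1, 2 < #|[set y in B | c y == i]|.
  move=> i; apply: (class_big hsz hex (p := q)) => //.
  - by apply/subsetP => y; rewrite inE => /andP [].
  - move=> y1 y2; rewrite !inE => /andP [y1B /eqP c1] /andP [y2B /eqP c2].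
    apply/negP => d; have := cprop y1 y2 y1B y2B d.
    by rewrite c1 c2 eqxx.
  - move=> x xs; have xI : x \in I by rewrite Ieq.
    have xB := subsetP IB x xI.
    have [y yN cy] := crain x xI i.
    exists y; last first.
      move: yN; rewrite /closed_nbhd /nbhd !inE; case/orP => [/eqP ->|/andP [_ d]].
      + by left.
      + by right.
    move: yN; rewrite /closed_nbhd /nbhd !inE; case/orP => [/eqP e|/andP [yB _]].
    + by rewrite cy eqxx e xB.
    + by rewrite yB cy eqxx.
have sumB : #|B| = \sum_(i < r.+1) #|[set y in B | c y == i]|.
  rewrite -sum1_card (partition_big c predT) //=.
  apply: eq_bigr => j _; rewrite -sum1_card; apply: eq_bigl => y; by rewrite inE.
have h3 : 3 * r.+1 <= #|B|.
  rewrite sumB; apply: (@leq_trans (\sum_(i < r.+1) 3)).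
    by rewrite sum_nat_const card_ord mulnC.
  by apply: leq_sum => i _; apply: cls.
have [x0 x0s] : exists x, x \in star B q.
  by apply/set0Pn; rewrite -card_gt0; exact: leq_trans _ sp2.
have x0B : x0 \in B by move: x0s; rewrite inE => /andP [].
have hb := reg_bound hk hsz hex huq q x0B.
have hr : #|[set y in B | [disjoint x0 & y]]| = r by rewrite -(hreg x0 x0B).
rewrite hr in hb.
exact: (ar2 hk Rq (blocks_count hk hsz hex huq q) h3 hb hv).
Qed.
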